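(* Let $\widehat{\mathcal T}_\bullet$ be an arbitrary hierarchical mesh on $\widehat\Omega$. Then $\{\widehat\beta\in\widehat{\mathcal H}_\bullet:\widehat\beta|_{\partial\widehat\Omega}=0\}$ is a basis of $\widehat{\mathcal X}_\bullet:=\{\widehat V\in{\rm span}\,\widehat{\mathcal H}_\bullet:\widehat V|_{\partial\widehat\Omega}=0\}$.
   Context: Parameter domain $\widehat\Omega=(0,1)^d$, $d\ge2$. Fix degrees $p_1,\dots,p_d\ge1$. For each $i$ let $\widehat{\mathcal K}^0_i=(t^0_{i,j})_{j=0}^{N^0_i+p_i}$ be a nondecreasing vector in $[0,1]$ whose first $p_i+1$ entries are $0$, last $p_i+1$ entries are $1$, and whose interior knots have multiplicity $\le p_i$. $\widehat{\mathcal K}^{k+1}_i$ arises from $\widehat{\mathcal K}^k_i$ by inserting the midpoint of every nondegenerate knot span once. $\widehat{\mathcal B}^k$ denotes the tensor-product B-splines of degree $(p_1,\dots,p_d)$ for $\widehat{\mathcal K}^k$, and $\widehat{\mathcal T}^k$ the closed cells of level $k$. A hierarchical mesh is given by closed sets $[0,1]^d=\widehat\Omega^0_\bullet\supseteq\widehat\Omega^1_\bullet\supseteq\cdots$, each $\widehat\Omega^k_\bullet$ ($k\ge1$) a union of cells of $\widehat{\mathcal T}^{k-1}$, with $\widehat\Omega^M_\bullet=\emptyset$ for some $M$; its hierarchical basis is $\widehat{\mathcal H}_\bullet=\bigcup_k\{\widehat\beta\in\widehat{\mathcal B}^k:{\rm supp}\,\widehat\beta\subseteq\widehat\Omega^k_\bullet,\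 {\rm supp}\,\widehat\beta\not\subseteq\widehat\Omega^{k+1}_\bullet\}$ (a linearly independent set). *)

(* Defs.v *)
From HB Require Import structures.
From mathcomp Require Import all_boot all_order all_algebra.
Set Implicit Arguments. Unset Strict Implicit. Unset Printing Implicit Defensive.
Import Order.TTheory GRing.Theory Num.Theory.
Local Open Scope ring_scope.

Section HB_Defs.
Variable R : realFieldType.

Fixpoint refine_knots (s : seq R) : seq R :=
  match s with
  | a :: ((b :: _) as s') =>
      if a < b then a :: (a + b) / 2%:R :: refine_knots s' else a :: refine_knots s'
  | _ => s
  end.

(** Degree 0: indicator of [t_j, t_{j+1}), closed on the right when t_{j+1}
    is the last knot and t_j < t_{j+1} (standard convention giving the
    continuous B-splines on the closed interval [0,1]).
    Note: in MathComp x / 0 = 0, which is the usual convention 0/0 := 0. *)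
Fixpoint bspline (t : seq R) (p j : nat) (x : R) : R :=
  match p with
  | 0 =>
      let a := nth 0 t j in let b := nth 0 t j.+1 in
      if (a <= x) && (x < b) then 1
      else if [&& a < b, b == last 0 t & x == b] then 1 else 0
  | q.+1 =>
      (x - nth 0 t j) / (nth 0 t (j + q.+1) - nth 0 t j) * bspline t q j x
    + (nth 0 t (j + q.+2) - x) / (nth 0 t (j + q.+2) - nth 0 t j.+1)
        * bspline t q j.+1 x
  end.

Definition nbs (t : seq R) (p : nat) : nat := (size t - p - 1)%N.

Definition open_knot_vector (p N : nat) (t : seq R) : Prop :=
  [/\ size t = (N + p).+1,
      sorted <=%R t,
      forall j, (j <= p)%N -> nth 0 t j = 0,
      forall j, (j <= p)%N -> nth 0 t (N + j) = 1
    & forall j, (p < j)%N -> (j < N)%N -> leq (count_mem (nth 0%R t j) t) p].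

Variable d : nat.

Definition Kk (K0 : 'I_d -> seq R) (k : nat) (i : 'I_d) : seq R :=
  iter k refine_knots (K0 i).

Definition tbspline (K : 'I_d -> seq R) (p j : 'I_d -> nat) (x : 'I_d -> R) : R :=
  \prod_(i < d) bspline (K i) (p i) (j i) (x i).

Definition idx := (nat * {ffun 'I_d -> nat})%type.

Definition beta (K0 : 'I_d -> seq R) (p : 'I_d -> nat) (a : idx) : ('I_d -> R) -> R :=
  tbspline (Kk K0 a.1) p a.2.

Definition in_supp (f : ('I_d -> R) -> R) (x : 'I_d -> R) : Prop :=
  forall e : R, 0 < e -> exists y : 'I_d -> R, (forall i, `|y i - x i| < e) /\ f y != 0.

Definition is_cell (t : 'I_d -> seq R) (c : 'I_d -> nat) : Prop :=
  forall i, ((c i).+1 < size (t i))%N /\ nth 0 (t i) (c i) < nth 0 (t i) (c i).+1.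

Definition in_cell (t : 'I_d -> seq R) (c : 'I_d -> nat) (x : 'I_d -> R) : Prop :=
  forall i, nth 0 (t i) (c i) <= x i <= nth 0 (t i) (c i).+1.

Definition unit_cube (x : 'I_d -> R) : Prop := forall i, 0 <= x i <= 1.

Definition hier_mesh (K0 : 'I_d -> seq R) (Om : nat -> ('I_d -> R) -> Prop) : Prop :=
  [/\ forall x, Om 0%N x <-> unit_cube x,
      forall k x, Om k.+1 x -> Om k x,
      forall k, exists S : ('I_d -> nat) -> Prop,
        (forall c, S c -> is_cell (Kk K0 k) c) /\
        (forall x, Om k.+1 x <-> exists c, S c /\ in_cell (Kk K0 k) c x)
    & exists M, forall x, ~ Om M x].

Definition in_H (K0 : 'I_d -> seq R) (p : 'I_d -> nat) (Om : nat -> ('I_d -> R) -> Prop)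
    (a : idx) : Prop :=
  [/\ forall i, (a.2 i < nbs (Kk K0 a.1 i) (p i))%N,
      forall x, in_supp (beta K0 p a) x -> Om a.1 x
    & ~ (forall x, in_supp (beta K0 p a) x -> Om a.1.+1 x)].

Definition on_boundary (x : 'I_d -> R) : Prop :=
  unit_cube x /\ exists i, x i = 0 \/ x i = 1.

Definition vanish_bdry (f : ('I_d -> R) -> R) : Prop :=
  forall x, on_boundary x -> f x = 0.

(** Linear algebra of function families, functions compared on closed [0,1]^d. *)
Definition lin_comb (s : seq idx) (c : idx -> R) (F : idx -> ('I_d -> R) -> R)
    (x : 'I_d -> R) : R := \sum_(a <- s) c a * F a x.

Definition in_span (P : idx -> Prop) (F : idx -> ('I_d -> R) -> R)
    (V : ('I_d -> R) -> R) : Prop :=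
  exists (s : seq idx) (c : idx -> R),
    (forall a, a \in s -> P a) /\ forall x, unit_cube x -> V x = lin_comb s c F x.

Definition lin_indep (P : idx -> Prop) (F : idx -> ('I_d -> R) -> R) : Prop :=
  forall (s : seq idx) (c : idx -> R), uniq s -> (forall a, a \in s -> P a) ->
    (forall x, unit_cube x -> lin_comb s c F x = 0) -> forall a, a \in s -> c a = 0.

Definition is_basis_of (P : idx -> Prop) (F : idx -> ('I_d -> R) -> R)
    (X : (('I_d -> R) -> R) -> Prop) : Prop :=
  [/\ forall a, P a -> X (F a), lin_indep P F & forall V, X V -> in_span P F V].

End HB_Defs.

(* Main.v *)
Require Import Defs.
From HB Require Import structures.
From mathcomp Require Import all_boot all_order all_algebra.
From mathcomp Require Import zify ring lra.
From Stdlib Require Import Classical ClassicalEpsilon.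
Set Implicit Arguments. Unset Strict Implicit. Unset Printing Implicit Defensive.
Import Order.TTheory GRing.Theory Num.Theory.
Local Open Scope ring_scope.


Section Knots.
Variable R : realFieldType.
Implicit Types (t s : seq R).

Definition KV (p : nat) t : Prop :=
  [/\ sorted <=%R t, all (fun x : R => (0 <= x <= 1)) t,
      exists r, t = nseq p.+1 0 ++ r & exists l, t = l ++ nseq p.+1 1].

Lemma refine_cons a s : exists s', refine_knots (a :: s) = a :: s'.
Proof. case: s => [|b s] /=; first by exists [::]. by case: ifP => _; eexists. Qed.

Lemma refine_cons2 (a b : R) s : refine_knots (a :: b :: s) =
  if a < b then a :: (a + b) / 2%:R :: refine_knots (b :: s) else a :: refine_knots (b :: s).
Proof. by []. Qed.

Lemma refine_nseq n (c : R) : refine_knots (nseq n c) = nseq n c.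
Proof.
elim: n => [|[|n] IH] //. rewrite [nseq _ _]/= /= ltxx. congr (_ :: _). exact: IH.
Qed.

Lemma refine_prefix n (c : R) r : exists r', refine_knots (nseq n.+1 c ++ r) = nseq n.+1 c ++ r'.
Proof.
elim: n => [|n [r' IH]]; first exact: refine_cons.
exists r'. move: IH. rewrite [nseq _ _]/= /= => IH. rewrite ltxx IH. by [].
Qed.

Lemma refine_suffix n (c : R) l : exists l', refine_knots (l ++ nseq n.+1 c) = l' ++ nseq n.+1 c.
Proof.
elim: l => [|a l [l' IH]]; first by exists [::]; rewrite refine_nseq.
rewrite cat_cons. case Hs: (l ++ nseq n.+1 c) => [|b s].
  by move: Hs; case: (l).
rewrite refine_cons2 -Hs IH. by case: ifP => _; [exists [:: a, (a + b) / 2%:R & l'] | exists (a :: l')].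
Qed.

Lemma mid_ge (a b : R) : a <= b -> a <= (a + b) / 2%:R.
Proof. move=> h. rewrite ler_pdivlMr ?ltr0n //. lra. Qed.
Lemma mid_le (a b : R) : a <= b -> (a + b) / 2%:R <= b.
Proof. move=> h. rewrite ler_pdivrMr ?ltr0n //. lra. Qed.

Lemma refine_sorted t : sorted <=%R t -> sorted <=%R (refine_knots t).
Proof.
case: t => // a s. elim: s a => [|b s IH] a //. rewrite /sorted. rewrite [path _ _ _]/=.
case/andP=> hab hs. have [s' Hs'] := refine_cons b s.
have := IH b hs. rewrite refine_cons2 Hs' => hs''.
case: ifP => hlt.
  by rewrite /= mid_ge //= mid_le.
by rewrite /= hab.
Qed.

Lemma refine_all (P : pred R) t :
  (forall a b, P a -> P b -> a < b -> P ((a + b) / 2%:R)) -> all P t -> all P (refine_knots t).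
Proof.
move=> HP. case: t => // a s. elim: s a => [|b s IH] a //. rewrite [all _ (_ :: _)]/=.
rewrite refine_cons2.
case/and3P=> ha hb hs. have := IH b. rewrite [all _ (_ :: _)]/= hb hs => /(_ isT) IH'.
case: ifP => hlt; rewrite [all _ (_ :: _)]/= ha ?HP //= IH' ?andbT //.
Qed.

Lemma refine_KV p t : KV p t -> KV p (refine_knots t).
Proof.
case=> hs ha [r hr] [l hl]. split.
- by apply: refine_sorted.
- apply: refine_all; last by [].
  move=> a b /andP[a0 a1] /andP[b0 b1] ab. apply/andP; split.
    by apply: le_trans (mid_ge (ltW ab)).
  by apply: le_trans (mid_le (ltW ab)) _.
- rewrite hr; exact: refine_prefix.
- rewrite hl. exact: refine_suffix.
Qed.

Lemma iter_refine_KV p t k : KV p t -> KV p (iter k (@refine_knots R) t).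
Proof. move=> h; elim: k => //= k IH; exact: refine_KV. Qed.

Lemma okv_KV p N t : open_knot_vector p N t -> KV p t.
Proof.
case=> hsz hs h0 h1 _.
have hle : forall i j, (i <= j)%N -> (j < size t)%N -> nth 0 t i <= nth 0 t j.
  move=> i j ij js. apply: (sorted_leq_nth le_trans lexx) => //.
  by rewrite inE; apply: leq_ltn_trans js.
split => //.
- apply/(all_nthP 0) => i hi. apply/andP; split.
    have := hle 0%N i (leq0n _) hi. by rewrite h0.
  have := hle i (N + p)%N _ _. rewrite h1 //. apply. move: hi; rewrite hsz; lia. rewrite hsz; lia.
- exists (drop p.+1 t). rewrite -{1}(cat_take_drop p.+1 t). congr (_ ++ _).
  have hst : size (take p.+1 t) = p.+1 by rewrite size_takel // hsz; lia.
  apply: (@eq_from_nth _ 0). by rewrite hst size_nseq.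
  move=> i; rewrite hst => hi. rewrite nth_take // nth_nseq hi h0 //.
- exists (take N t). rewrite -{1}(cat_take_drop N t). congr (_ ++ _).
  apply: (@eq_from_nth _ 0). rewrite size_drop size_nseq hsz. lia.
  move=> i; rewrite size_drop hsz => hi. rewrite nth_drop nth_nseq ifT; [rewrite h1 //; lia | lia].
Qed.

Section KVfacts.
Variables (p : nat) (t : seq R).
Hypothesis hK : KV p t.

Lemma KV_le i j : (i <= j)%N -> (j < size t)%N -> nth 0 t i <= nth 0 t j.
Proof.
case: hK => hs _ _ _ ij js. apply: (sorted_leq_nth le_trans lexx) => //.
by rewrite inE; apply: leq_ltn_trans js.
Qed.

Lemma KV_ge0 j : 0 <= nth 0 t j.
Proof.
case: hK => _ ha _ _. case: (ltnP j (size t)) => hj; last by rewrite nth_default.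
by have /andP[] := all_nthP 0 ha j hj.
Qed.

Lemma KV_le1 j : nth 0 t j <= 1.
Proof.
case: hK => _ ha _ _. case: (ltnP j (size t)) => hj; last by rewrite nth_default.
by have /andP[] := all_nthP 0 ha j hj.
Qed.

Lemma KV_pre j : (j <= p)%N -> nth 0 t j = 0.
Proof. case: hK => _ _ [r ->] _ hj. by rewrite nth_cat size_nseq ltnS hj nth_nseq ltnS hj. Qed.

Lemma KV_suf j : (size t - p.+1 <= j)%N -> (j < size t)%N -> nth 0 t j = 1.
Proof.
case: hK => _ _ _ [l hl]. rewrite hl size_cat size_nseq => h1 h2.
rewrite nth_cat ifN; last by rewrite -leqNgt; move: h1; rewrite addnK.
rewrite nth_nseq ifT //. clear -h1 h2. set n := size l in h1 h2 *. lia.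
Qed.

Lemma KV_span m : (m.+1 < size t)%N -> nth 0 t m < nth 0 t m.+1 ->
  (p <= m)%N /\ (m + p.+1 < size t)%N.
Proof.
move=> hm hlt. split.
  rewrite leqNgt; apply/negP => hmp. move: hlt.
  rewrite (KV_pre (j := m)); last by lia.
  by rewrite (KV_pre (j := m.+1)) ?ltxx //.
rewrite ltnNge; apply/negP => hmp. move: hlt.
rewrite (KV_suf (j := m)); [|lia|lia].
rewrite (KV_suf (j := m.+1)) ?ltxx //; lia.
Qed.

End KVfacts.
End Knots.


Section BS.
Variable R : realFieldType.
Variables (p : nat) (t : seq R).
Hypothesis hK : KV p t.
Local Notation T j := (nth 0 t j).

Lemma bs0E j x : bspline t 0 j x != 0 ->
  (T j <= x < T j.+1) \/ (T j < T j.+1 /\ x = T j.+1).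
Proof.
rewrite /=. case: ifP => [h _|_]; first by left.
case: ifP => [/and3P[h1 _ /eqP h3] _|_]; last by rewrite eqxx.
by right.
Qed.

Lemma bsSE q j x : bspline t q.+1 j x =
  (x - T j) / (T (j + q.+1) - T j) * bspline t q j x
  + (T (j + q.+2) - x) / (T (j + q.+2) - T j.+1) * bspline t q j.+1 x.
Proof. by []. Qed.

Lemma bsS_nz q j x : bspline t q.+1 j x != 0 ->
  ((x - T j) / (T (j + q.+1) - T j) != 0 /\ bspline t q j x != 0) \/
  ((T (j + q.+2) - x) / (T (j + q.+2) - T j.+1) != 0 /\ bspline t q j.+1 x != 0).
Proof.
rewrite bsSE. set a := _ * _; set b := _ * _.
have [ha|ha] := eqVneq a 0.
  rewrite ha add0r => hb; right. by move: hb; rewrite /b mulf_eq0 negb_or => /andP.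
move=> _; left. by move: ha; rewrite /a mulf_eq0 negb_or => /andP.
Qed.

Lemma bs_active m x q j : (m.+1 < size t)%N -> T m < x < T m.+1 ->
  bspline t q j x != 0 -> (j <= m)%N /\ (m <= j + q)%N.
Proof.
move=> hm /andP[xl xr]. elim: q j => [|q IH] j.
  case/bs0E => [/andP[h1 h2]|[h1 h2]].
  - case: (ltnP j m) => jm.
      have : T j.+1 <= T m.
        case: (ltnP j.+1 (size t)) => hj1; first by apply: (KV_le hK); lia.
        rewrite nth_default //. exact: (KV_ge0 hK m).
      move=> h; exfalso. have := lt_le_trans xl (le_trans (ltW h2) h). by rewrite ltxx.
    case: (ltnP m j) => mj; last by split; lia.
    case: (ltnP j (size t)) => hj.
      have : T m.+1 <= T j by apply: (KV_le hK).
      move=> h; exfalso. have := lt_le_trans xr (le_trans h h1). by rewrite ltxx.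
    exfalso. move: h2; rewrite nth_default; last exact: leqW hj.
    move=> h2. have := lt_trans (le_lt_trans (KV_ge0 hK m) xl) h2. by rewrite ltxx.
  - exfalso. case: (ltnP j.+1 (size t)) => hj1; last first.
      move: h2; rewrite nth_default // => h2. subst x.
      have := le_lt_trans (KV_ge0 hK m) xl. by rewrite ltxx.
    subst x.
    case: (ltnP j m) => jm.
      have := KV_le hK (i := j.+1) (j := m) jm (ltnW hm). move=> h.
      have := lt_le_trans xl h. by rewrite ltxx.
    have := KV_le hK (i := m.+1) (j := j.+1) _ hj1. rewrite ltnS => /(_ jm) h.
    have := lt_le_trans xr h. by rewrite ltxx.
case/bsS_nz => [[_ /IH [h1 h2]]|[_ /IH [h1 h2]]]; split; lia.
Qed.

Lemma bs0_one m x : T m <= x < T m.+1 -> bspline t 0 m x = 1.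
Proof. by move=> h /=; rewrite h. Qed.

Lemma bs_supp q j y : (j + q.+1 < size t)%N -> bspline t q j y != 0 ->
  [/\ T j <= y, y <= T (j + q.+1) & T j < T (j + q.+1)].
Proof.
elim: q j => [|q IH] j hj.
  rewrite addn1. case/bs0E => [/andP[h1 h2]|[h1 h2]].
    by split => //; [apply: ltW| apply: le_lt_trans h2].
  by subst y; split => //; apply: ltW.
case/bsS_nz => [[_ hb]|[_ hb]].
  have := IH j _ hb. case; first by lia. move=> h1 h2 h3. split => //.
    apply: (le_trans h2). apply: (KV_le hK); lia.
  apply: (lt_le_trans h3). apply: (KV_le hK); lia.
have := IH j.+1 _ hb. case; first by lia. rewrite -!addSnnS => h1 h2 h3. split => //.
  apply: le_trans h1. apply: (KV_le hK); lia.
apply: le_lt_trans h3. apply: (KV_le hK); lia.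
Qed.

Lemma bs_at0 q j : (j + q.+1 < size t)%N -> bspline t q j 0 != 0 ->
  T (j + q) <= 0 < T (j + q).+1.
Proof.
elim: q j => [|q IH] j hj.
  rewrite addn0. case/bs0E => [//|[h1 h2]]. exfalso.
  have := le_lt_trans (KV_ge0 hK j) h1. by rewrite -h2 ltxx.
case/bsS_nz => [[hc hb]|[_ hb]]; last first.
  have := IH j.+1 _ hb. rewrite !addSnnS. apply. lia.
have := IH j _ hb. case/(_ _)/andP; first lia. move=> h1 h2. exfalso. move: hc.
have : T j = 0.
  apply/le_anti; rewrite (KV_ge0 hK) andbT. apply: le_trans h1. apply: (KV_le hK); lia.
by move=> ->; rewrite subrr mul0r eqxx.
Qed.

Lemma bs_at1 q j : (j + q.+1 < size t)%N -> bspline t q j 1 != 0 ->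
  T j < T j.+1 /\ T j.+1 = 1.
Proof.
elim: q j => [|q IH] j hj.
  case/bs0E => [/andP[h1 h2]|[h1 h2]]; last by [].
  exfalso. have := lt_le_trans h2 (KV_le1 hK j.+1). by rewrite ltxx.
case/bsS_nz => [[_ hb]|[hc hb]]; first by apply: IH hb; lia.
have := IH j.+1 _ hb. case; first lia. move=> h1 h2. exfalso. move: hc.
have : T (j + q.+2) = 1.
  apply/le_anti; rewrite (KV_le1 hK) /=. rewrite -h2. apply: (KV_le hK); lia.
by move=> ->; rewrite subrr mul0r eqxx.
Qed.

End BS.


Section Marsden.
Variable R : realFieldType.
Variables (p : nat) (t : seq R).
Hypothesis hK : KV p t.
Local Notation T j := (nth 0 t j).

Definition psi (j q : nat) (y : R) : R := \prod_(i < q) (y - T (j + i).+1).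

Lemma marsden m x q y : (m.+1 < size t)%N -> T m < x < T m.+1 ->
  (q <= m)%N -> (m + q.+1 < size t)%N ->
  (y - x) ^+ q = \sum_(j < m.+1) psi j q y * bspline t q j x.
Proof.
move=> hm hx. elim: q => [|q IH] hqm hmq.
  rewrite expr0 big_ord_recr big1 ?add0r.
    rewrite /psi big_ord0 mul1r. case/andP: hx => xl xr.
    rewrite [nat_of_ord _]/= bs0_one; [by rewrite /= add0r | by rewrite (ltW xl) xr].
  move=> [j hj] _. rewrite /psi big_ord0 mul1r /=.
  apply/eqP; apply: contraT => hb. have [h1 h2] := @bs_active _ _ _ hK m x 0 j hm hx hb. lia.
have IH' := IH (ltnW hqm) (leq_trans (leqnSn _) (leq_trans _ hmq)).
rewrite !addnS ltnS in IH'. move: {IH'}(IH' (ltnSn _)) => IH'.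
rewrite exprS IH' mulr_sumr; symmetry.
under eq_bigr do rewrite bsSE mulrDr.
rewrite big_split /=.
rewrite [X in X + _ = _]big_ord_recl [X in _ + X = _]big_ord_recr /=.
rewrite [RHS]big_ord_recl /=.
have B0 : bspline t q 0 x = 0.
  apply/eqP; apply: contraT => hb. have [h1 h2] := bs_active hK hm hx hb. lia.
have Bm : bspline t q m.+1 x = 0.
  apply/eqP; apply: contraT => hb. have [h1 h2] := bs_active hK hm hx hb. lia.
rewrite B0 Bm !mulr0 add0r addr0 add0r -big_split /=.
apply: eq_bigr => [[j hj]] _ /=.
have [hb|hb] := eqVneq (bspline t q j.+1 x) 0; first by rewrite hb !mulr0 addr0.
have [h1 h2] := bs_active hK hm hx hb.
rewrite /bump /= add1n.
have -> : psi j.+1 q.+1 y = psi j.+1 q y * (y - T (j.+1 + q).+1).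
  by rewrite /psi big_ord_recr.
have -> : psi j q.+1 y = (y - T j.+1) * psi j.+1 q y.
  rewrite /psi big_ord_recl /= addn0. congr (_ * _). apply: eq_bigr => i _.
  by rewrite /bump /= add1n addnS addSn.
have E1 : (j.+2 + q = (j+q).+2)%N by lia.
have E2 : (j + q.+2 = (j+q).+2)%N by lia.
rewrite ?addSn ?addnS.
have hD : T (j + q).+2 - T j.+1 != 0.
  rewrite subr_eq0; apply/eqP => he. case/andP: hx => xl xr.
  have e1 : T j.+1 <= T m by apply: (KV_le hK) => //; lia.
  have e2 : T m.+1 <= T (j + q).+2 by apply: (KV_le hK) => //; lia.
  have := lt_le_trans (le_lt_trans e1 xl) (le_trans (ltW xr) e2). by rewrite he ltxx.
move: hD. set c := T (j + q).+2. set a := T j.+1. set P := psi j.+1 q y.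
set B := bspline t q j.+1 x. move=> hD.
rewrite !mulrA. rewrite -!mulrDl. congr (_ * _).
field. exact: hD.
Qed.


Lemma sum_shift m (F : nat -> R) : (p <= m)%N -> (forall j, (j < m - p)%N -> F j = 0) ->
  \sum_(j < m.+1) F j = \sum_(r < p.+1) F (m - p + r)%N.
Proof.
move=> hpm hF. rewrite -(big_mkord xpredT F) (@big_cat_nat _ _ _ (m - p)) /=; [|by []|lia].
rewrite big_nat_cond big1 ?add0r; last by move=> j /andP[/andP[_ hj] _]; apply: hF.
rewrite -{1}[(m - p)%N]add0n big_addn.
have -> : (m.+1 - (m - p) = p.+1)%N by lia.
rewrite big_mkord. apply: eq_bigr => i _. by rewrite addnC.
Qed.

Lemma ULI m (c : nat -> R) : (m.+1 < size t)%N -> T m < T m.+1 ->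
  (forall x, T m < x < T m.+1 -> \sum_(r < p.+1) c r * bspline t p (m - p + r) x = 0) ->
  forall r, (r < p.+1)%N -> c r = 0.
Proof.
move=> hm hlt hyp.
have [hpm hmp] := KV_span hK hm hlt.
set h := T m.+1 - T m.
have h0 : 0 < h by rewrite subr_gt0.
pose xs (l : 'I_p.+1) : R := T m + h * (l.+1%:R / p.+2%:R).
have xs_in l : T m < xs l < T m.+1.
  have f0 : 0 < l.+1%:R / p.+2%:R :> R by rewrite divr_gt0 ?ltr0n.
  have f1 : l.+1%:R / p.+2%:R < 1 :> R.
    by rewrite ltr_pdivrMr ?ltr0n // mul1r ltr_nat ltnS.
  apply/andP; split; first by rewrite /xs ltrDl mulr_gt0.
  rewrite /xs -ltrBrDl -/h. by rewrite gtr_pMr.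
have xs_inj : injective xs.
  move=> l1 l2 /addrI /(mulfI (lt0r_neq0 h0)) /(mulIf (invr_neq0 (lt0r_neq0 (ltr0Sn R p.+1)))).
  move/eqP; rewrite eqr_nat eqSS => /eqP; exact: val_inj.
pose ys (k : 'I_p.+1) : R := k.+1%:R.
have ys0 k : ys k != 0 by rewrite /ys pnatr_eq0.
have ys_inj : injective ys.
  move=> k1 k2 /eqP; rewrite /ys eqr_nat eqSS => /eqP; exact: val_inj.
pose E := \matrix_(r < p.+1, l < p.+1) bspline t p (m - p + r) (xs l).
pose Ps := \matrix_(k < p.+1, r < p.+1) psi (m - p + r) p (ys k).
pose W := \matrix_(k < p.+1, l < p.+1) (ys k - xs l) ^+ p.
have hW : W = Ps *m E.
  apply/matrixP => k l; rewrite !mxE.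
  rewrite (@marsden m (xs l) p (ys k) hm (xs_in l) hpm hmp).
  rewrite (@sum_shift m (fun j => psi j p (ys k) * bspline t p j (xs l))) //.
    apply: eq_bigr => r _; by rewrite !mxE.
  move=> j hj. apply/eqP; rewrite mulf_eq0; apply/orP; right.
  apply/eqP/eqP; apply: contraT => hb.
  have [_ h2] := @bs_active _ _ _ hK m (xs l) p j hm (xs_in l) hb. lia.
pose A := \matrix_(k < p.+1, r < p.+1) ((ys k) ^+ (p - r) *+ 'C(p, r)).
pose V := Vandermonde p.+1 (\row_(l < p.+1) (- xs l)).
have hWAV : W = A *m V.
  apply/matrixP => k l; rewrite !mxE. rewrite exprDn.
  apply: eq_bigr => r _; rewrite !mxE. by rewrite mulrnAl.
have hdV : \det V != 0.
  rewrite det_Vandermonde; apply/prodf_neq0 => i _; apply/prodf_neq0 => j hij.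
  rewrite !mxE subr_eq0 eqr_opp. apply/eqP => /xs_inj hji.
  by move: hij; rewrite hji ltnn.
pose yi := \row_(k < p.+1) (ys k)^-1.
pose D1 := diag_mx (\row_(k < p.+1) (ys k) ^+ p).
pose D2 := diag_mx (\row_(r < p.+1) ('C(p, r))%:R : 'rV[R]_p.+1).
have hA : A = D1 *m (Vandermonde p.+1 yi)^T *m D2.
  rewrite mul_mx_diag mul_diag_mx. apply/matrixP => k r; rewrite !mxE.
  rewrite exprB ?unitfE ?ys0 //; last by rewrite -ltnS.
  by rewrite exprVn mulr_natr.
have hdA : \det A != 0.
  rewrite hA !det_mulmx !det_diag det_tr det_Vandermonde.
  rewrite !mulf_neq0 //.
  - apply/prodf_neq0 => i _; rewrite mxE expf_neq0 //.
  - apply/prodf_neq0 => i _; apply/prodf_neq0 => j hij.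
    rewrite !mxE subr_eq0. apply/eqP => /invr_inj /ys_inj hji.
    by move: hij; rewrite hji ltnn.
  - apply/prodf_neq0 => i _; rewrite mxE pnatr_eq0 -lt0n bin_gt0 -ltnS //.
have hdE : \det E != 0.
  have : \det W != 0 by rewrite hWAV det_mulmx mulf_neq0.
  by rewrite hW det_mulmx mulf_eq0 negb_or => /andP[].
pose cv : 'rV[R]_p.+1 := \row_r c r.
have hcE : cv *m E = 0.
  apply/rowP => l; rewrite !mxE.
  transitivity (\sum_(r < p.+1) c r * bspline t p (m - p + r) (xs l)); last exact: hyp.
  apply: eq_bigr => r _; by rewrite !mxE.
have cv0 : cv = 0.
  apply/eqP; apply: contraT => hne.
  have : \det E == 0 by apply/det0P; exists cv.
  by rewrite (negbTE hdE).
move=> r hr. have := congr1 (fun v : 'rV[R]_p.+1 => v 0 (Ordinal hr)) cv0.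
by rewrite !mxE.
Qed.

End Marsden.


Section Regroup.
Variable R : realFieldType.

Lemma regroup (P : nat) (t : seq R) (hK : KV P t) M x (J : Type) (s : seq J) (g : J -> nat)
  (F : J -> R) : (M.+1 < size t)%N -> nth 0 t M < x < nth 0 t M.+1 -> (P <= M)%N ->
  \sum_(r < P.+1) (\sum_(j <- s | g j == (M - P + r)%N) F j) * bspline t P (M - P + r) x
  = \sum_(j <- s) F j * bspline t P (g j) x.
Proof.
move=> hm hx hPM.
transitivity (\sum_(r < P.+1) \sum_(j <- s) (if g j == (M - P + r)%N then F j * bspline t P (g j) x else 0)).
  apply: eq_bigr => r _; rewrite mulr_suml big_mkcond; apply: eq_bigr => j _.
  by case: eqP => [->|].
rewrite exchange_big. apply: eq_bigr => j _ /=.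
case: (boolP ((M - P <= g j) && (g j <= M))%N) => hj.
  have hr : (g j - (M - P) < P.+1)%N by lia.
  rewrite (bigD1 (Ordinal hr)) //= ifT; last by apply/eqP; lia.
  rewrite big1 ?addr0 // => r hr'. case: eqP => // hE. exfalso.
  move: hr' => /eqP; apply. apply: val_inj => /=. lia.
rewrite big1.
  apply/esym/eqP; rewrite mulf_eq0; apply/orP; right; apply/eqP/eqP.
  apply: contraT => hb. have [h1 h2] := bs_active hK hm hx hb. case/negP: hj. apply/andP; split; lia.
move=> r _. case: eqP => // hE. exfalso. move: (ltn_ord r) => hr. case/negP: hj. apply/andP; split; lia.
Qed.

End Regroup.

Section Tensor.
Variable R : realFieldType.
Variables (d : nat) (K : 'I_d -> seq R) (p : 'I_d -> nat).
Hypothesis hKs : forall i, KV (p i) (K i).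

Definition prodB (L : seq 'I_d) (j : {ffun 'I_d -> nat}) (w : 'I_d -> R) : R :=
  \prod_(i <- L) bspline (K i) (p i) (j i) (w i).

Definition in_spans (L : seq 'I_d) (m : 'I_d -> nat) (w : 'I_d -> R) :=
  forall i, i \in L -> nth 0 (K i) (m i) < w i < nth 0 (K i) (m i).+1.

Lemma TLI (L : seq 'I_d) (m : 'I_d -> nat) (J : Type) (s : seq J) (g : J -> {ffun 'I_d -> nat})
  (c : J -> R) :
  uniq L ->
  (forall i, i \in L -> ((m i).+1 < size (K i))%N /\ nth 0 (K i) (m i) < nth 0 (K i) (m i).+1) ->
  (forall w, in_spans L m w -> \sum_(j <- s) c j * prodB L (g j) w = 0) ->
  forall j0, (forall i, i \in L -> (j0 i <= m i)%N /\ (m i <= j0 i + p i)%N) ->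
  \sum_(j <- s | all (fun i => g j i == j0 i) L) c j = 0.
Proof.
elim: L s => [|i0 L IH] s huniq hm hyp j0 hj0.
  have := hyp (fun _ => 0) (fun i (hi : i \in [::]) => ltac:(by [])).
  by under eq_bigr do rewrite /prodB big_nil mulr1.
move: huniq => /andP[i0L uL].
have [hm0 hlt0] := hm i0 (mem_head _ _).
have [hP hMP] := KV_span (hKs i0) hm0 hlt0.
set M := m i0. set P := p i0.
have key : forall r, (r < P.+1)%N -> forall w, in_spans L m w ->
   \sum_(j <- s | g j i0 == (M - P + r)%N) c j * prodB L (g j) w = 0.
  move=> r hr w hw.
  pose cc (r : nat) := \sum_(j <- s | g j i0 == (M - P + r)%N) c j * prodB L (g j) w.
  apply: (@ULI _ P (K i0) (hKs i0) M cc hm0 hlt0 _ r hr).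
  move=> x hx. rewrite /cc (regroup (hKs i0) s (fun j => g j i0) (fun j => c j * prodB L (g j) w) hm0 hx hP).
  pose w' := fun i => if i == i0 then x else w i.
  have hw' : in_spans (i0 :: L) m w'.
    move=> i; rewrite inE => /orP[/eqP ->|hi]; rewrite /w' ?eqxx //.
    case: eqP => [e|_]; last exact: hw.
    by move: i0L; rewrite -e hi.
  rewrite -[RHS](hyp w' hw'). apply: eq_bigr => j _.
  have Ew : prodB L (g j) w' = prodB L (g j) w.
    apply: eq_big_seq => i hi; rewrite /w' ifN //.
    apply/negP => /eqP e; move: i0L; by rewrite -e hi.
  rewrite /prodB big_cons -/(prodB L (g j) w') Ew /w' eqxx.
  rewrite -/(prodB L (g j) w). ring.
set r0 := (j0 i0 - (M - P))%N.
have [hj1 hj2] := hj0 i0 (mem_head _ _).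
have hr0 : (r0 < P.+1)%N by rewrite /r0; lia.
have e0 : (M - P + r0)%N = j0 i0 by rewrite /r0; lia.
have := IH (filter (fun j => g j i0 == (M - P + r0)%N) s) uL _ _ j0 _.
- rewrite big_filter_cond e0 => H. rewrite -[RHS]H. apply: eq_bigl => j /=. by [].
- move=> i hi; apply: hm; by rewrite inE hi orbT.
- move=> w hw; rewrite big_filter. have := key r0 hr0 w hw. by rewrite e0.
- move=> i hi; apply: hj0; by rewrite inE hi orbT.
Qed.

End Tensor.


Section Helpers.
Variable R : realFieldType.

Definition ec (T : eqType) (s : seq T) (c : T -> R) (a : T) : R := \sum_(b <- s | b == a) c b.

Lemma sum_pred1_undup (T : eqType) (s : seq T) (b : T) (X : R) : b \in s ->
  \sum_(a <- undup s | b == a) X = X.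
Proof.
move=> hb. rewrite (big_rem b) ?mem_undup // eqxx big1_seq; first by rewrite /= addr0.
move=> a /andP[/eqP <-]. by rewrite mem_rem_uniqF ?undup_uniq.
Qed.

Lemma sum_undup_cond (T : eqType) (s : seq T) (P : pred T) (c F : T -> R) :
  \sum_(b <- s | P b) c b * F b = \sum_(a <- undup s | P a) ec s c a * F a.
Proof.
rewrite /ec.
transitivity (\sum_(a <- undup s | P a) \sum_(b <- s | b == a) c b * F b); last first.
  apply: eq_bigr => a _. rewrite mulr_suml. apply: eq_bigr => b. by move/eqP ->.
rewrite big_mkcond [RHS]big_mkcond.
transitivity (\sum_(b <- s) \sum_(a <- undup s) (if b == a then (if P b then c b * F b else 0) else 0)).
  rewrite [RHS]big_seq_cond [LHS]big_seq_cond. apply: eq_bigr => x /andP[hx _].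
  rewrite -big_mkcond sum_pred1_undup //.
rewrite [LHS]exchange_big. apply: eq_bigr => a _.
case: (boolP (P a)) => hP; last first.
  rewrite big1 // => b _. case: eqP => // ->. by rewrite (negbTE hP).
rewrite [RHS]big_mkcond. apply: eq_bigr => b _. case: eqP => [->|]; by rewrite ?hP.
Qed.

Lemma ec_uniq (T : eqType) (s : seq T) (c : T -> R) a : uniq s -> a \in s -> ec s c a = c a.
Proof.
move=> us ha. rewrite /ec (big_rem a) // eqxx big1_seq; first by rewrite /= addr0.
move=> b /andP[/eqP -> ]. by rewrite mem_rem_uniqF.
Qed.

Lemma find_span (q : nat) (t : seq R) (hK : KV q t) n a z : (a + n.+1 < size t)%N ->
  nth 0 t a <= z <= nth 0 t (a + n.+1) -> nth 0 t a < nth 0 t (a + n.+1) ->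
  exists m, [/\ (a <= m)%N, (m <= a + n)%N, nth 0 t m <= z <= nth 0 t m.+1
               & nth 0 t m < nth 0 t m.+1].
Proof.
elim: n a => [|n IH] a ha hz hlt.
  exists a; rewrite addn1 in hz hlt; split => //; lia.
have hle1 : nth 0 t a.+1 <= nth 0 t (a + n.+2) by apply: (KV_le hK); lia.
case/andP: hz => hz1 hz2.
case: (ltP z (nth 0 t a.+1)) => hza.
  exists a; split => //; first lia; first by rewrite hz1 (ltW hza).
  exact: le_lt_trans hz1 hza.
case: (ltP (nth 0 t a.+1) (nth 0 t (a + n.+2))) => h2.
  have ha' : (a.+1 + n.+1 < size t)%N by rewrite addSnnS.
  have hz' : nth 0 t a.+1 <= z <= nth 0 t (a.+1 + n.+1) by rewrite addSnnS hza hz2.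
  have hlt' : nth 0 t a.+1 < nth 0 t (a.+1 + n.+1) by rewrite addSnnS.
  have [m [h3 h4 h5 h6]] := IH a.+1 ha' hz' hlt'. exists m; split => //; lia.
exists a; split => //; first lia.
  have e : nth 0 t a.+1 = nth 0 t (a + n.+2) by apply/le_anti; rewrite hle1.
  by rewrite hz1 e.
have e : nth 0 t a.+1 = nth 0 t (a + n.+2) by apply/le_anti; rewrite hle1.
by rewrite e.
Qed.

Lemma cell_unique (q : nat) (t : seq R) (hK : KV q t) c m w :
  (c.+1 < size t)%N -> (m.+1 < size t)%N ->
  nth 0 t c <= w <= nth 0 t c.+1 -> nth 0 t m < w < nth 0 t m.+1 -> c = m.
Proof.
move=> hc hm /andP[h1 h2] /andP[h3 h4].
case: (ltngtP c m) => // hcm; exfalso.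
  have := KV_le hK (i := c.+1) (j := m) hcm (ltnW hm) => h.
  have := lt_le_trans h3 h2. by rewrite ltNge h.
have := KV_le hK (i := m.+1) (j := c) hcm (ltnW hc) => h.
have := lt_le_trans h4 (le_trans h h1). by rewrite ltxx.
Qed.

Lemma face0_unique (q : nat) (t : seq R) (hK : KV q t) c m :
  (c.+1 < size t)%N -> (m.+1 < size t)%N ->
  nth 0 t c <= 0 <= nth 0 t c.+1 -> nth 0 t c < nth 0 t c.+1 ->
  nth 0 t m <= 0 < nth 0 t m.+1 -> c = m.
Proof.
move=> hc hm /andP[h1 h2] hlt /andP[h3 h4].
case: (ltngtP c m) => // hcm; exfalso.
  have := KV_le hK (i := c.+1) (j := m) hcm (ltnW hm) => h.
  have := KV_ge0 hK c => h0.
  have := lt_le_trans hlt (le_trans h h3). by rewrite ltNge h0.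
have := KV_le hK (i := m.+1) (j := c) hcm (ltnW hc) => h.
have := lt_le_trans h4 (le_trans h h1). by rewrite ltxx.
Qed.

Lemma face1_unique (q : nat) (t : seq R) (hK : KV q t) c m :
  (c.+1 < size t)%N -> (m.+1 < size t)%N ->
  nth 0 t c <= 1 <= nth 0 t c.+1 -> nth 0 t c < nth 0 t c.+1 ->
  nth 0 t m < nth 0 t m.+1 -> nth 0 t m.+1 = 1 -> c = m.
Proof.
move=> hc hm /andP[h1 h2] hlt h3 h4.
case: (ltngtP c m) => // hcm; exfalso.
  have := KV_le hK (i := c.+1) (j := m) hcm (ltnW hm) => h.
  rewrite h4 in h3. have := le_lt_trans (le_trans h2 h) h3. by rewrite ltxx.
have := KV_le hK (i := m.+1) (j := c) hcm (ltnW hc) => h.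
rewrite h4 in h. have := lt_le_trans (le_lt_trans h hlt) (KV_le1 hK _). by rewrite ltxx.
Qed.

End Helpers.


Section Main.
Variable R : realFieldType.
Variables (d : nat) (p : 'I_d -> nat) (K0 : 'I_d -> seq R) (Om : nat -> ('I_d -> R) -> Prop).
Hypothesis hKl : forall k i, KV (p i) (Kk K0 k i).
Hypothesis hmesh : hier_mesh K0 Om.

Local Notation B := (beta K0 p).
Local Notation inH := (in_H K0 p Om).
Local Notation T k i j := (nth 0 (Kk K0 k i) j).

Lemma Om_nested k k' x : (k <= k')%N -> Om k' x -> Om k x.
Proof.
case: hmesh => _ hn _ _. move=> hkk'.
have -> : k' = (k + (k' - k))%N by lia.
elim: (k' - k)%N => [|n IH]; first by rewrite addn0.
by rewrite addnS => /hn.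
Qed.

Lemma beta_nz_Om a w k : inH a -> (k < a.1)%N -> B a w != 0 -> Om k.+1 w.
Proof.
case=> _ hs _ hk hb. apply: (@Om_nested _ a.1) => //. apply: hs => e he.
exists w; split => //. by move=> i; rewrite subrr normr0.
Qed.

Lemma beta_factor a y i : B a y != 0 -> bspline (Kk K0 a.1 i) (p i) (a.2 i) (y i) != 0.
Proof.
rewrite /beta /tbspline. apply: contraNneq => h0. apply/prodf_eq0. by exists i => //; rewrite h0.
Qed.

Lemma inH_range a i : inH a -> (a.2 i + (p i).+1 < size (Kk K0 a.1 i))%N.
Proof. case=> h _ _. have := h i. rewrite /nbs. set n := size _. lia. Qed.

Lemma supp_box a x : inH a -> in_supp (B a) x -> forall i,
  [/\ T a.1 i (a.2 i) <= x i, x i <= T a.1 i (a.2 i + (p i).+1)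
    & T a.1 i (a.2 i) < T a.1 i (a.2 i + (p i).+1)].
Proof.
move=> ha hs i. have hr := inH_range i ha.
have [y [_ hy]] := hs 1 ltr01.
have [_ _ hlt] := bs_supp (hKl a.1 i) hr (beta_factor i hy).
split => //.
  rewrite leNgt; apply/negP => hx.
  have he : 0 < T a.1 i (a.2 i) - x i by rewrite subr_gt0.
  have [y' [hyx hy']] := hs _ he.
  have [h1 _ _] := bs_supp (hKl a.1 i) hr (beta_factor i hy').
  have := hyx i. have := ler_norm (y' i - x i). lra.
rewrite leNgt; apply/negP => hx.
have he : 0 < x i - T a.1 i (a.2 i + (p i).+1) by rewrite subr_gt0.
have [y' [hyx hy']] := hs _ he.
have [_ h1 _] := bs_supp (hKl a.1 i) hr (beta_factor i hy').
have := hyx i. rewrite distrC. have := ler_norm (x i - y' i). lra.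
Qed.

Lemma inH_witness a : inH a -> exists z, in_supp (B a) z /\ ~ Om a.1.+1 z.
Proof.
case=> _ _ h3. apply: NNPP => H; apply: h3 => x hx; apply: NNPP => hn; apply: H; exists x; by split.
Qed.

Lemma cube_spans k (m : 'I_d -> nat) w (L : seq 'I_d) (v : R) :
  (forall i, i \in L -> T k i (m i) < w i < T k i (m i).+1) ->
  (forall i, i \notin L -> w i = v) -> 0 <= v <= 1 -> unit_cube w.
Proof.
move=> hw hv hv01 i. case: (boolP (i \in L)) => hi; last by rewrite hv.
case/andP: (hw i hi) => h1 h2. apply/andP; split.
  exact: le_trans (KV_ge0 (hKl k i) _) (ltW h1).
exact: le_trans (ltW h2) (KV_le1 (hKl k i) _).
Qed.


Lemma split_level (s : seq (idx d)) (c : idx d -> R) k w :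
  (forall b, b \in s -> (b.1 < k)%N -> ec s c b = 0 \/ B b w = 0) ->
  (forall b, b \in s -> (k < b.1)%N -> B b w = 0) ->
  lin_comb s c B w = \sum_(b <- s | b.1 == k) c b * B b w.
Proof.
move=> hlo hhi. rewrite /lin_comb (bigID (fun b : idx d => b.1 == k)) /=.
rewrite [X in _ + X](bigID (fun b : idx d => (b.1 < k)%N)) /=.
rewrite [X in _ + (_ + X)]big1_seq; last first.
  move=> b /andP[/andP[h1 h2] hb]. rewrite hhi // ?mulr0 //. move: h1 h2. rewrite neq_ltn -leqNgt. case/orP => h1 h2 //. by rewrite ltnNge h2 in h1.
rewrite [X in _ + (X + _)]sum_undup_cond [X in _ + (X + _)]big1_seq.
  by rewrite /= !addr0.
move=> b /andP[/andP[_ hlt] hb]. rewrite mem_undup in hb.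
by case: (hlo b hb hlt) => ->; rewrite ?mul0r ?mulr0.
Qed.

Lemma level_ind (s : seq (idx d)) (Q : idx d -> Prop) (f : idx d -> R) :
  (forall a, a \in s -> Q a -> (forall b, b \in s -> (b.1 < a.1)%N -> Q b -> f b = 0) -> f a = 0) ->
  forall a, a \in s -> Q a -> f a = 0.
Proof.
move=> H. suff h : forall n a, (a.1 < n)%N -> a \in s -> Q a -> f a = 0.
  move=> a; exact: h a.1.+1 a (ltnSn _).
elim=> [|n IH] a // ha. move=> ha' hQ. apply: H => // b hb hlt. apply: IH => //. exact: leq_trans hlt ha.
Qed.

Lemma spans_of a z : inH a -> in_supp (B a) z -> exists m : 'I_d -> nat,
  forall i, [/\ ((m i).+1 < size (Kk K0 a.1 i))%N, T a.1 i (m i) < T a.1 i (m i).+1,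
        (a.2 i <= m i)%N, (m i <= a.2 i + p i)%N & T a.1 i (m i) <= z i <= T a.1 i (m i).+1].
Proof.
move=> ha hz.
have hm : forall i, exists mi, [/\ (a.2 i <= mi)%N, (mi <= a.2 i + p i)%N,
    T a.1 i mi <= z i <= T a.1 i mi.+1 & T a.1 i mi < T a.1 i mi.+1].
  move=> i. have [h1 h2 h3] := supp_box ha hz i.
  apply: (find_span (hKl a.1 i)) => //; [exact: inH_range | by rewrite h1 h2].
have [m hm'] := fin_all_exists hm.
exists m => i; have [h1 h2 h3 h4] := hm' i; split => //.
have := inH_range i ha. lia.
Qed.

Lemma LI_region a : inH a -> exists m : 'I_d -> nat,
  (forall i, [/\ ((m i).+1 < size (Kk K0 a.1 i))%N, T a.1 i (m i) < T a.1 i (m i).+1,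
        (a.2 i <= m i)%N & (m i <= a.2 i + p i)%N]) /\
  (forall w, (forall i, T a.1 i (m i) < w i < T a.1 i (m i).+1) -> ~ Om a.1.+1 w).
Proof.
move=> ha. have [z [hz hnz]] := inH_witness ha.
have [m hm] := spans_of ha hz.
exists m; split; first by move=> i; have [] := hm i.
move=> w hw hOw. apply: hnz.
case: hmesh => _ _ hS _. have [S [hSc hSe]] := hS a.1.
have [c [hc hcw]] := (hSe w).1 hOw.
apply/(hSe z).2. exists c; split => //.
move=> i. have [hm1 _ _ _ hz'] := hm i.
have hci : c i = m i.
  have [hc1 _] := hSc c hc i.
  exact: (cell_unique (hKl a.1 i) hc1 hm1 (hcw i) (hw i)).
by rewrite hci.
Qed.

Lemma face_region a i0 v m0 : inH a ->
  (forall c, (c.+1 < size (Kk K0 a.1 i0))%N -> T a.1 i0 c <= v <= T a.1 i0 c.+1 ->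
     T a.1 i0 c < T a.1 i0 c.+1 -> c = m0) ->
  (forall z, in_supp (B a) z -> T a.1 i0 m0 <= z i0 <= T a.1 i0 m0.+1) ->
  exists m : 'I_d -> nat,
  (forall i, [/\ ((m i).+1 < size (Kk K0 a.1 i))%N, T a.1 i (m i) < T a.1 i (m i).+1,
        (a.2 i <= m i)%N & (m i <= a.2 i + p i)%N]) /\
  (forall w, w i0 = v -> (forall i, i != i0 -> T a.1 i (m i) < w i < T a.1 i (m i).+1) ->
     ~ Om a.1.+1 w).
Proof.
move=> ha hu hz0. have [z [hz hnz]] := inH_witness ha.
have [m hm] := spans_of ha hz.
exists m; split; first by move=> i; have [] := hm i.
move=> w hwv hw hOw. apply: hnz.
case: hmesh => _ _ hS _. have [S [hSc hSe]] := hS a.1.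
have [c [hc hcw]] := (hSe w).1 hOw.
apply/(hSe z).2. exists c; split => //.
move=> i. have [hm1 _ _ _ hz'] := hm i.
case: (eqVneq i i0) => [->|hi].
  have [hc1 hc2] := hSc c hc i0.
  have := hcw i0. rewrite hwv => hcv.
  rewrite (hu (c i0) hc1 hcv hc2). exact: hz0.
have hci : c i = m i.
  have [hc1 _] := hSc c hc i.
  exact: (cell_unique (hKl a.1 i) hc1 hm1 (hcw i) (hw i hi)).
by rewrite hci.
Qed.


Lemma LI_main (s : seq (idx d)) (c : idx d -> R) :
  (forall a, a \in s -> inH a) -> (forall x, unit_cube x -> lin_comb s c B x = 0) ->
  forall a, a \in s -> ec s c a = 0.
Proof.
move=> hs hV.
suff HH : forall a, a \in s -> True -> ec s c a = 0 by move=> a ha; exact: HH.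
apply: (@level_ind s (fun _ => True) (ec s c)) => a ha _ IH.
set k := a.1.
have [m [hm hOm]] := LI_region (hs a ha).
pose L := enum 'I_d.
have key : forall w, in_spans (Kk K0 k) L m w ->
  \sum_(b <- filter (fun b : idx d => b.1 == k) s) c b * prodB (Kk K0 k) p L b.2 w = 0.
  move=> w hw.
  have hw' : forall i, T k i (m i) < w i < T k i (m i).+1 by move=> i; apply: hw; rewrite mem_enum.
  have hnO := hOm w hw'.
  have hcube : unit_cube w.
    apply: (cube_spans (k := k) (m := m) (L := L) (v := 0)).
    - by move=> i _; exact: hw' i.
    - by move=> i; rewrite mem_enum.
    - by rewrite lexx ler01.
  rewrite -[RHS](hV w hcube) (split_level (k := k)).
  - rewrite big_filter. apply: eq_bigr => b /eqP hb.
    by rewrite /beta /tbspline hb /prodB big_enum.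
  - move=> b hb hlt; left; exact: IH.
  - move=> b hb hlt; apply/eqP; apply: contraT => hnz. exfalso; apply: hnO.
    exact: beta_nz_Om (hs b hb) hlt hnz.
have := TLI (hKl k) (L := L) (m := m) (s := filter (fun b : idx d => b.1 == k) s)
  (g := snd) (c := c) (enum_uniq _) _ key (j0 := a.2) _.
rewrite big_filter_cond => H. rewrite /ec -[RHS]H. apply: eq_bigl => b.
- apply/idP/idP.
    move/eqP ->. rewrite eqxx /=. by apply/allP => i _.
  case/andP => /eqP h1 /allP h2. apply/eqP.
  rewrite [b]surjective_pairing [a]surjective_pairing h1; congr pair.
  apply/ffunP => i; apply/eqP; apply: h2; by rewrite mem_enum.
- by move=> i _; have [] := hm i.
- by move=> i _; have [] := hm i.
Qed.


Lemma SPAN_main (s : seq (idx d)) (c : idx d -> R) (V : ('I_d -> R) -> R) :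
  (forall a, a \in s -> inH a) -> (forall x, unit_cube x -> V x = lin_comb s c B x) ->
  vanish_bdry V -> forall a, a \in s -> ~ vanish_bdry (B a) -> ec s c a = 0.
Proof.
move=> hs hV hvan.
apply: (@level_ind s (fun a => ~ vanish_bdry (B a)) (ec s c)) => a ha hnv IH.
set k := a.1.
have [x [hxb hx]] : exists x, on_boundary x /\ B a x != 0.
  apply: NNPP => H; apply: hnv => x hxb. apply: NNPP => hn. apply: H.
  exists x; split => //. by apply/eqP.
case: (hxb) => hxc [i0 hi0].
set v := x i0.
have hv01 : v = 0 \/ v = 1 := hi0.
have hBv : bspline (Kk K0 k i0) (p i0) (a.2 i0) v != 0 := beta_factor i0 hx.
have hra := inH_range i0 (hs a ha).
have hK := hKl k i0.
have [m0 [hu hz0 hjuniq]] : exists m0,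
  [/\ (forall c, (c.+1 < size (Kk K0 k i0))%N -> T k i0 c <= v <= T k i0 c.+1 ->
        T k i0 c < T k i0 c.+1 -> c = m0),
      (forall z, in_supp (B a) z -> T k i0 m0 <= z i0 <= T k i0 m0.+1)
    & (forall j, (j + (p i0).+1 < size (Kk K0 k i0))%N ->
        bspline (Kk K0 k i0) (p i0) j v != 0 -> j = a.2 i0)].
  case: hv01 => hv.
  - rewrite hv in hBv. have /andP[h1 h2] := bs_at0 hK hra hBv.
    have hm0 : ((a.2 i0 + p i0).+1 < size (Kk K0 k i0))%N by rewrite -addnS.
    exists (a.2 i0 + p i0)%N; split.
    + move=> c0 hc hcv hcn. rewrite hv in hcv.
      apply: (face0_unique hK hc hm0 hcv hcn). by rewrite h1 h2.
    + move=> z hz. have [z1 z2 _] := supp_box (hs a ha) hz i0.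
      apply/andP; split; last by rewrite -addnS.
      apply: le_trans h1 _. exact: le_trans (KV_ge0 hK _) z1.
    + move=> j hj hjnz. rewrite hv in hjnz. have /andP[g1 g2] := bs_at0 hK hj hjnz.
      have hj' : ((j + p i0).+1 < size (Kk K0 k i0))%N by rewrite -addnS.
      have : (j + p i0 = a.2 i0 + p i0)%N.
        apply: (face0_unique hK hj' hm0 _ (le_lt_trans g1 g2)); first by rewrite g1 (ltW g2).
        by rewrite h1 h2.
      by move/addIn.
  - rewrite hv in hBv. have [h1 h2] := bs_at1 hK hra hBv.
    have hm0 : ((a.2 i0).+1 < size (Kk K0 k i0))%N.
      apply: leq_ltn_trans hra. by rewrite addnS ltnS leq_addr.
    exists (a.2 i0); split.
    + move=> c0 hc hcv hcn. rewrite hv in hcv.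
      exact: (face1_unique hK hc hm0 hcv hcn h1 h2).
    + move=> z hz. have [z1 z2 _] := supp_box (hs a ha) hz i0.
      apply/andP; split => //. rewrite h2. exact: le_trans z2 (KV_le1 hK _).
    + move=> j hj hjnz. rewrite hv in hjnz. have [g1 g2] := bs_at1 hK hj hjnz.
      have hj' : (j.+1 < size (Kk K0 k i0))%N.
        apply: leq_ltn_trans hj. by rewrite addnS ltnS leq_addr.
      apply: (face1_unique hK hj' hm0 _ g1 h1 h2).
      by rewrite (KV_le1 hK) g2 lexx.
have [m [hm hOm]] := face_region (hs a ha) hu hz0.
pose L := filter (fun i => i != i0) (enum 'I_d).
pose Bv (b : idx d) := bspline (Kk K0 k i0) (p i0) (b.2 i0) v.
have key : forall w, in_spans (Kk K0 k) L m w ->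
  \sum_(b <- filter (fun b : idx d => b.1 == k) s) (c b * Bv b) * prodB (Kk K0 k) p L b.2 w = 0.
  move=> w hw. pose w' := fun i => if i == i0 then v else w i.
  have hw' : forall i, i != i0 -> T k i (m i) < w' i < T k i (m i).+1.
    move=> i hi; rewrite /w' (negbTE hi); apply: hw; by rewrite mem_filter hi mem_enum.
  have hw0 : w' i0 = v by rewrite /w' eqxx.
  have hnO := hOm w' hw0 hw'.
  have hcube : unit_cube w'.
    apply: (cube_spans (k := k) (m := m) (L := L) (v := v)).
    - move=> i; rewrite mem_filter => /andP[hi _]; exact: hw' i hi.
    - move=> i; rewrite mem_filter mem_enum andbT negbK => /eqP ->; by rewrite /w' eqxx.
    - by case: hv01 => ->; rewrite ?lexx ?ler01.
  have hbd : on_boundary w' by split => //; exists i0; rewrite /w' eqxx.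
  have := hvan w' hbd. rewrite (hV w' hcube) (split_level (k := k)).
  - move=> H. rewrite -[RHS]H big_filter. apply: eq_bigr => b /eqP hb.
    rewrite /beta /tbspline hb (bigD1 i0) //= /prodB big_filter big_enum_cond /w' eqxx.
    rewrite /Bv -!mulrA. congr (_ * (_ * _)). apply: eq_bigr => i hi. by rewrite (negbTE hi).
  - move=> b hb hlt. case: (classic (vanish_bdry (B b))) => hvb.
      by right; exact: hvb _ hbd.
    by left; exact: IH b hb hlt hvb.
  - move=> b hb hlt; apply/eqP; apply: contraT => hnz. exfalso; apply: hnO.
    exact: beta_nz_Om (hs b hb) hlt hnz.
have hL1 : forall i, i \in L -> ((m i).+1 < size (Kk K0 k i))%N /\ T k i (m i) < T k i (m i).+1.
  by move=> i _; have [] := hm i.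
have hL2 : forall i, i \in L -> (a.2 i <= m i)%N /\ (m i <= a.2 i + p i)%N.
  by move=> i _; have [] := hm i.
have := TLI (hKl k) (L := L) (m := m) (s := filter (fun b : idx d => b.1 == k) s)
  (g := snd) (c := fun b => c b * Bv b) (filter_uniq _ (enum_uniq _)) hL1 key hL2.
rewrite big_filter_cond => H.
have : ec s c a * Bv a = 0.
  rewrite -[RHS]H /ec. rewrite big_distrl /= big_mkcond [RHS]big_mkcond. apply: eq_big_seq => b hb.
  case: (eqVneq b a) => [->|hba].
    by rewrite eqxx /= ifT //; apply/allP.
  rewrite /=. case: ifP => // /andP[/eqP h1 /allP h2].
  have hr : (b.2 i0 + (p i0).+1 < size (Kk K0 k i0))%N.
    by have := inH_range i0 (hs b hb); rewrite h1.
  have hB0 : Bv b = 0.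
    apply/eqP; apply: contraT => hnz. have e := hjuniq _ hr hnz.
    exfalso; move/eqP: hba; apply.
    rewrite [b]surjective_pairing [a]surjective_pairing h1; congr pair.
    apply/ffunP => i. case: (eqVneq i i0) => [->|hi] //.
    apply/eqP; apply: h2; by rewrite mem_filter hi mem_enum.
  by rewrite hB0 mulr0.
move=> hh; apply/eqP; move/eqP: hh; rewrite mulf_eq0 => /orP[//|]. by rewrite /Bv (negbTE hBv).
Qed.

End Main.


Theorem corollary3p2 (R : realFieldType) (d : nat) (p N0 : 'I_d -> nat)
    (K0 : 'I_d -> seq R) (Om : nat -> ('I_d -> R) -> Prop) :
  (2 <= d)%N ->
  (forall i, (1 <= p i)%N) ->
  (forall i, open_knot_vector (p i) (N0 i) (K0 i)) ->
  hier_mesh K0 Om ->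
  is_basis_of (fun a => in_H K0 p Om a /\ vanish_bdry (beta K0 p a)) (beta K0 p)
    (fun V => in_span (in_H K0 p Om) (beta K0 p) V /\ vanish_bdry V).
Proof.
move=> _ _ hokv hmesh.
have hKl : forall k i, KV (p i) (Kk K0 k i).
  move=> k i. exact: iter_refine_KV k (okv_KV (hokv i)).
have LIH : lin_indep (in_H K0 p Om) (beta K0 p).
  move=> s c us hs hz a ha. rewrite -(ec_uniq c us ha).
  exact: (LI_main hKl hmesh hs hz ha).
split.
- move=> a [ha hva]; split => //. exists [:: a], (fun _ => 1); split.
    by move=> b; rewrite inE => /eqP ->.
  move=> x _. by rewrite /lin_comb big_cons big_nil mul1r addr0.
- move=> s c us hs hz a ha. exact: LIH s c us (fun b hb => (hs b hb).1) hz a ha.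
move=> V [[s [c [hs hVs]]] hvan].
pose vb a := if excluded_middle_informative (vanish_bdry (beta K0 p a)) then true else false.
exists (filter vb (undup s)), (ec s c). split.
  move=> a; rewrite mem_filter mem_undup => /andP[hvb ha]. split; first exact: hs.
  by move: hvb; rewrite /vb; case: excluded_middle_informative.
move=> x hx. rewrite hVs // /lin_comb big_filter.
rewrite (sum_undup_cond s xpredT c (fun a => beta K0 p a x)).
rewrite (bigID vb) /= [X in _ + X]big1_seq ?addr0 //.
move=> a /andP[hnv ha]. rewrite mem_undup in ha.
rewrite (SPAN_main hKl hmesh hs hVs hvan ha) ?mul0r //.
by move: hnv; rewrite /vb; case: excluded_middle_informative.
Qed.
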